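(* Let $\mathcal{A}$ and $\mathcal{B}$ be two copies of the same finite-dimensional Hilbert space and $\rho$ a density operator on $\mathcal{A}\otimes\mathcal{B}$. Then the swap test on $\mathcal{A}\otimes\mathcal{B}$ applied to $\rho$ returns the antisymmetric outcome with probability at least $\tfrac12-\tfrac12F(\operatorname{tr}_{\mathcal{A}}\rho,\operatorname{tr}_{\mathcal{B}}\rho)$.
   Context: Let $W$ be the swap operator on $\mathcal{A}\otimes\mathcal{B}$, $W|a\rangle|b\rangle=|b\rangle|a\rangle$. The swap test is the two-outcome projective measurement $\{(\mathbb{1}+W)/2,(\mathbb{1}-W)/2\}$ (projections onto the symmetric and antisymmetric subspaces); the antisymmetric outcome occurs with probability $\operatorname{tr}\big(\tfrac{\mathbb{1}-W}{2}\rho\big)$. Fidelity: $F(\sigma,\xi)=\operatorname{tr}\sqrt{\sqrt\sigma\,\xi\sqrt\sigma}$; the two reduced states $\operatorname{tr}_{\mathcal{A}}\rho$ and $\operatorname{tr}_{\mathcal{B}}\rho$ are regarded as density operators on the same space via the identification of $\mathcal{A}$ and $\mathcal{B}$. *)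

(* Defs.v *)
(* Complex scalars: an arbitrary numClosedFieldType C
   (e.g. algC, or complex R for a real closed field R). *)
From HB Require Import structures.
From mathcomp Require Import all_boot all_order all_algebra.
Set Implicit Arguments. Unset Strict Implicit. Unset Printing Implicit Defensive.
Import Order.TTheory GRing.Theory Num.Theory.
Local Open Scope ring_scope.

Section QDefs.
Variable C : numClosedFieldType.

Definition adjmx m n (A : 'M[C]_(m, n)) : 'M[C]_(n, m) := (map_mx Num.conj A)^T.

Definition psdmx m (A : 'M[C]_m) : Prop :=
  adjmx A = A /\ forall v : 'rV[C]_m, 0 <= (v *m A *m adjmx v) 0 0.

Definition density m (A : 'M[C]_m) : Prop := psdmx A /\ \tr A = 1.

(* matrix square root via the spectral decomposition A = P^-1 diag(d) P
   (P unitary, available for normal A, in particular for PSD A):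
   sqrt A = P^-1 diag(sqrt d) P.  For PSD A this is the unique PSD square root. *)
Definition sqrtmx m (A : 'M[C]_m) : 'M[C]_m :=
  invmx (spectralmx A) *m diag_mx (map_mx sqrtC (spectral_diag A)) *m spectralmx A.

Definition fidelity m (s x : 'M[C]_m) : C :=
  \tr (sqrtmx (sqrtmx s *m x *m sqrtmx s)).

(* A (x) B with A = B = C^n: basis vector |a>|b> has index mxvec_index a b. *)

(* swap operator W = sum_{a,b} |b a><a b|, i.e. W |a>|b> = |b>|a> *)
Definition swapmx n : 'M[C]_(n * n) :=
  \sum_(a < n) \sum_(b < n) delta_mx (mxvec_index b a) (mxvec_index a b).

Definition ptrA n (rho : 'M[C]_(n * n)) : 'M[C]_n :=
  \matrix_(b, b') \sum_(a < n) rho (mxvec_index a b) (mxvec_index a b').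

Definition ptrB n (rho : 'M[C]_(n * n)) : 'M[C]_n :=
  \matrix_(a, a') \sum_(b < n) rho (mxvec_index a b) (mxvec_index a' b).

Definition antisym_prob n (rho : 'M[C]_(n * n)) : C :=
  \tr ((2^-1) *: (1%:M - swapmx n) *m rho).

End QDefs.

(* Main.v *)
Require Import Defs.
From HB Require Import structures.
From mathcomp Require Import all_boot all_order all_algebra.
From mathcomp Require Import ring lra.
Import Order.TTheory GRing.Theory Num.Theory.
Local Open Scope ring_scope.
Set Implicit Arguments. Unset Strict Implicit. Unset Printing Implicit Defensive.

Section Q.
Variable C : numClosedFieldType.

Lemma adjmxE m n (A : 'M[C]_(m, n)) i j : adjmx A i j = (A j i)^*.
Proof. by rewrite /adjmx !mxE. Qed.

Lemma adjmx_sesq m n (A : 'M[C]_(m, n)) : adjmx A = (A ^t*)%sesqui.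
Proof. by rewrite /adjmx map_trmx. Qed.

Lemma adjmxK m n (A : 'M[C]_(m, n)) : adjmx (adjmx A) = A.
Proof. by apply/matrixP => i j; rewrite !adjmxE conjCK. Qed.

Lemma adjmxM m n p (A : 'M[C]_(m, n)) (B : 'M[C]_(n, p)) :
  adjmx (A *m B) = adjmx B *m adjmx A.
Proof. by rewrite /adjmx map_mxM trmx_mul. Qed.

Lemma adjmx1 m : adjmx (1%:M : 'M[C]_m) = 1%:M.
Proof. by rewrite /adjmx map_mx1 trmx1. Qed.

Lemma adjmx_diag m (d : 'rV[C]_m) : adjmx (diag_mx d) = diag_mx (map_mx Num.conj d).
Proof. by rewrite /adjmx map_diag_mx tr_diag_mx. Qed.

Lemma unitary_adj m (P : 'M[C]_m) : P \is unitarymx ->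
  P *m adjmx P = 1%:M /\ adjmx P *m P = 1%:M /\ invmx P = adjmx P.
Proof.
move=> Pu; have e1 : P *m adjmx P = 1%:M by rewrite adjmx_sesq; apply/unitarymxP.
have ei : invmx P = adjmx P by rewrite adjmx_sesq invmx_unitary.
split=> //; split=> //; rewrite -ei mulVmx //; exact: unitarymx_unit.
Qed.

Lemma psd_herm m (A : 'M[C]_m) : psdmx A -> A \is normalmx.
Proof.
case=> hA _; apply/eqP; rewrite -!adjmx_sesq hA //.
Qed.

Lemma spec_psd m (A : 'M[C]_m) : psdmx A ->
  let P := spectralmx A in let d := spectral_diag A in
  [/\ P *m adjmx P = 1%:M, adjmx P *m P = 1%:M,
      A = adjmx P *m diag_mx d *m P & forall i, 0 <= d 0 i].
Proof.
move=> hA P d.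
have [e1 [e2 ei]] := unitary_adj (spectral_unitarymx A).
have eA : A = adjmx P *m diag_mx d *m P.
  by rewrite /P -ei; apply/orthomx_spectralP/psd_herm.
split=> // i.
have := hA.2 (row i P).
have -> : (row i P *m A *m adjmx (row i P)) 0 0 = (P *m A *m adjmx P) i i.
  rewrite -row_mul !mxE; apply: eq_bigr => k _; rewrite !mxE //.
rewrite eA !mulmxA e1 mul1mx -mulmxA e1 mulmx1.
by rewrite mxE eqxx mulr1n.
Qed.

Lemma sqrt_psd m (A : 'M[C]_m) : psdmx A ->
  [/\ adjmx (sqrtmx A) = sqrtmx A, sqrtmx A *m sqrtmx A = A &
      \tr (sqrtmx A) = \sum_i sqrtC (spectral_diag A 0 i)].
Proof.
move=> hA; have [e1 e2 eA dge0] := spec_psd hA.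
have [_ [_ ei]] := unitary_adj (spectral_unitarymx A).
rewrite /sqrtmx ei; split.
- rewrite !adjmxM adjmxK adjmx_diag !mulmxA; congr (_ *m _ *m _).
  congr diag_mx; apply/matrixP => i j; rewrite !mxE geC0_conj //.
  by rewrite ord1 sqrtC_ge0.
- rewrite -!mulmxA [spectralmx A *m _]mulmxA e1 mul1mx [diag_mx _ *m (diag_mx _ *m _)]mulmxA mulmx_diag mulmxA.
  rewrite [X in _ = X]eA; congr (_ *m _ *m _); congr diag_mx.
  by apply/matrixP => i j; rewrite !mxE ord1 -expr2 sqrtCK.
- by rewrite (mxtrace_mulC (adjmx _ *m _)) mulmxA e1 mul1mx mxtrace_diag; apply: eq_bigr => i _; rewrite mxE.
Qed.

Lemma gram_psd m N (M : 'M[C]_(m, N)) : psdmx (M *m adjmx M).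
Proof.
split; first by rewrite adjmxM adjmxK.
move=> v; rewrite mulmxA -[v *m M *m adjmx M *m adjmx v]mulmxA -adjmxM.
rewrite mxE sumr_ge0 // => k _; rewrite adjmxE; exact: mul_conjC_ge0.
Qed.

Lemma rowdot m N (A B : 'M[C]_(m, N)) i :
  (row i A *m adjmx (row i B)) 0 0 = (A *m adjmx B) i i.
Proof. by rewrite !mxE; apply: eq_bigr => k _; rewrite !mxE. Qed.

Lemma sum_abs2_eq0 N (f : 'I_N -> C) :
  \sum_k f k * (f k)^* = 0 -> forall k, f k = 0.
Proof.
move=> /psumr_eq0P h k; have /eqP := h (fun k _ => mul_conjC_ge0 (f k)) k isT.
by rewrite -normCK sqrf_eq0 normr_eq0 => /eqP.
Qed.

Lemma proj_diag_le1 m (G : 'M[C]_m) (e : 'rV[C]_m) i :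
  G *m adjmx G = 1%:M -> (forall j, 0 <= e 0 j <= 1) ->
  0 <= (G *m diag_mx e *m adjmx G) i i <= 1.
Proof.
move=> hG he.
have -> : (G *m diag_mx e *m adjmx G) i i = \sum_j e 0 j * (G i j * (G i j)^*).
  rewrite mxE; apply: eq_bigr => j _; rewrite mul_mx_diag !mxE; ring.
have h1 : \sum_j (G i j * (G i j)^*) = 1.
  have /matrixP/(_ i i) := hG; rewrite !mxE eqxx mulr1n => <-.
  by apply: eq_bigr => j _; rewrite !mxE.
apply/andP; split.
  apply: sumr_ge0 => j _; apply: mulr_ge0; first by have /andP[] := he j.
  exact: mul_conjC_ge0.
rewrite -h1; apply: ler_sum => j _.
have /andP[e0 e1] := he j.
by rewrite ler_piMl // mul_conjC_ge0.
Qed.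

Lemma uhl n N (X Y : 'M[C]_(n, N)) :
  'Re (\tr (adjmx X *m Y)) <= fidelity (Y *m adjmx Y) (X *m adjmx X).
Proof.
have hs := gram_psd Y.
have [q1 q2 es mge0] := spec_psd hs.
have [Sadj SS _] := sqrt_psd hs.
have [_ [_ qi]] := unitary_adj (spectral_unitarymx (Y *m adjmx Y)).
set s := Y *m adjmx Y in hs q1 q2 es mge0 Sadj SS qi *.
set Q := spectralmx s in q1 q2 es qi *.
set mu := spectral_diag s in es mge0 *.
set S := sqrtmx s in Sadj SS *.
have eS : S = adjmx Q *m diag_mx (map_mx sqrtC mu) *m Q by rewrite /S /sqrtmx qi.
pose nu : 'rV[C]_n := \row_i (sqrtC (mu 0 i))^-1.
have nuge0 i : 0 <= nu 0 i by rewrite mxE invr_ge0 sqrtC_ge0.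
pose Z := adjmx Q *m diag_mx nu *m Q *m Y.
have QYn i : \sum_k (Q *m Y) i k * ((Q *m Y) i k)^* = mu 0 i.
  have : (Q *m Y) *m adjmx (Q *m Y) = diag_mx mu.
    rewrite adjmxM !mulmxA -(mulmxA Q) -/s es !mulmxA q1 mul1mx -mulmxA q1.
    by rewrite mulmx1.
  move/matrixP/(_ i i); rewrite [in RHS]mxE eqxx mulr1n => <-.
  by rewrite mxE; apply: eq_bigr => k _; rewrite adjmxE.
have SZ : S *m Z = Y.
  rewrite eS /Z !mulmxA -(mulmxA _ Q (adjmx Q)) q1 mulmx1.
  rewrite -(mulmxA (adjmx Q)) mulmx_diag -!mulmxA.
  set D := diag_mx _.
  have -> : D *m (Q *m Y) = Q *m Y.
    set QY := Q *m Y in QYn *.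
    apply/matrixP => i k; rewrite /D mul_diag_mx !mxE.
    have [m0|m0] := eqVneq (mu 0 i) 0.
      have := QYn i; rewrite m0 => /sum_abs2_eq0/(_ k).
      by rewrite mxE => ->; rewrite mulr0.
    by rewrite mulfV ?mul1r // sqrtC_eq0.
  by rewrite mulmxA q2 mul1mx.
pose e : 'rV[C]_n := \row_i (nu 0 i * mu 0 i * nu 0 i).
have ZZ : Z *m adjmx Z = adjmx Q *m diag_mx e *m Q.
  have adn : adjmx (diag_mx nu) = diag_mx nu.
    rewrite adjmx_diag; congr diag_mx; apply/matrixP => i j.
    by rewrite mxE geC0_conj // ord1 nuge0.
  rewrite /Z !adjmxM adjmxK adn !mulmxA -(mulmxA _ Y (adjmx Y)) -/s es !mulmxA.
  rewrite -(mulmxA _ Q (adjmx Q)) q1 mulmx1.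
  rewrite -(mulmxA _ Q (adjmx Q)) q1 mulmx1.
  rewrite -(mulmxA (adjmx Q) (diag_mx nu)) mulmx_diag.
  rewrite -(mulmxA (adjmx Q)) mulmx_diag.
  by congr (_ *m diag_mx _ *m _); apply/matrixP => i j; rewrite !mxE.
have he j : 0 <= e 0 j <= 1.
  rewrite !mxE; have [m0|m0] := eqVneq (mu 0 j) 0.
    by rewrite m0 mulr0 mul0r ler01 andbT.
  have r0 : sqrtC (mu 0 j) != 0 by rewrite sqrtC_eq0.
  set r := sqrtC (mu 0 j) in r0 *.
  have er : mu 0 j = r * r by rewrite /r -expr2 sqrtCK.
  by rewrite er mulrA mulVf // mul1r mulfV // ler01 lexx.
pose B := S *m X.
have hk := gram_psd B.
have [p1 p2 ek lge0] := spec_psd hk.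
have [_ _ trK] := sqrt_psd hk.
have eB : adjmx B = adjmx X *m S by rewrite /B adjmxM Sadj.
have eK : S *m (X *m adjmx X) *m S = B *m adjmx B.
  by rewrite eB /B !mulmxA.
rewrite /fidelity -/S eK trK.
set K := B *m adjmx B in hk p1 p2 ek lge0 trK eK *.
set P := spectralmx K in p1 p2 ek *.
set lam := spectral_diag K in ek lge0 *.
have et : \tr (adjmx X *m Y) = \sum_i ((P *m Z) *m adjmx (P *m B)) i i.
  rewrite -SZ mulmxA -eB.
  have -> : \sum_i ((P *m Z) *m adjmx (P *m B)) i i
            = \tr ((P *m Z) *m adjmx (P *m B)) by [].
  rewrite adjmxM mxtrace_mulC [RHS]mxtrace_mulC -(mulmxA (adjmx B)) (mulmxA (adjmx P)) p2 mul1mx.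
  exact: mxtrace_mulC.
have hi i : `|((P *m Z) *m adjmx (P *m B)) i i| <= sqrtC (lam 0 i).
  rewrite -rowdot adjmx_sesq -dotmxE.
  apply: le_trans (CauchySchwarz_sqrt (@dotmx C N) _ _).1 _.
  have dU : dotmx (row i (P *m B)) (row i (P *m B)) = lam 0 i.
    rewrite dotmxE -adjmx_sesq rowdot adjmxM mulmxA -[P *m B *m adjmx B]mulmxA -/K ek.
    rewrite !mulmxA p1 mul1mx -mulmxA p1 mulmx1 mxE eqxx mulr1n //.
  have dV : 0 <= dotmx (row i (P *m Z)) (row i (P *m Z)) <= 1.
    rewrite dotmxE -adjmx_sesq rowdot adjmxM mulmxA -[P *m Z *m adjmx Z]mulmxA ZZ.
    have -> : P *m (adjmx Q *m diag_mx e *m Q) *m adjmx P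
       = (P *m adjmx Q) *m diag_mx e *m adjmx (P *m adjmx Q).
      by rewrite adjmxM adjmxK !mulmxA.
    apply: proj_diag_le1 => //.
    by rewrite adjmxM adjmxK mulmxA -(mulmxA P) q2 mulmx1 p1.
  have /andP[dV0 dV1] := dV.
  change (sqrtC (dotmx (row i (P *m Z)) (row i (P *m Z))) *
    sqrtC (dotmx (row i (P *m B)) (row i (P *m B))) <= sqrtC (lam 0 i)).
  rewrite dU -[X in _ <= X]mul1r; apply: ler_wpM2r; first by rewrite sqrtC_ge0.
  by rewrite -sqrtC1 ler_sqrtC // nnegrE.
rewrite et; apply: le_trans (leif_Re_Creal _).1 _.
apply: le_trans (ler_norm_sum _ _ _) _.
by apply: ler_sum => i _; exact: hi.
Qed.

Lemma trace_delta m (A : 'M[C]_m) i j : \tr (delta_mx i j *m A) = A j i.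
Proof.
rewrite /mxtrace (bigD1 i) //= big1 ?addr0; last first.
  move=> k /negPf ki; rewrite mxE big1 // => l _; rewrite mxE ki mul0r //.
rewrite mxE (bigD1 j) //= big1 ?addr0; last first.
  by move=> l /negPf lj; rewrite mxE lj andbF mul0r.
by rewrite mxE !eqxx mul1r.
Qed.

Definition dec n m (j : 'I_(n * m)) : 'I_n * 'I_m :=
  enum_val (cast_ord (esym (mxvec_cast n m)) j).

Lemma decE n m (b : 'I_n) (k : 'I_m) : dec (mxvec_index b k) = (b, k).
Proof. by rewrite /dec /mxvec_index cast_ordK enum_rankK. Qed.

Lemma sum_mxvec n m (F : 'I_(n * m) -> C) :
  \sum_j F j = \sum_b \sum_k F (mxvec_index b k).
Proof.
rewrite pair_big /= (reindex (uncurry (@mxvec_index n m))) /=.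
  by apply: eq_bigr => -[b k].
by case: (curry_mxvec_bij n m) => g g1 g2; exists g => x _; [apply: g1|apply: g2].
Qed.

End Q.

Unset Implicit Arguments.
Theorem lemma4p3 (C : numClosedFieldType) (n : nat) (rho : 'M[C]_(n * n)) :
  density rho ->
  2^-1 - 2^-1 * fidelity (ptrA rho) (ptrB rho) <= antisym_prob rho.
Proof.
move=> [hr tr1].
have [Radj RR _] := sqrt_psd hr.
set R := sqrtmx rho in Radj RR.
have eR : rho = R *m adjmx R by rewrite Radj RR.
pose X : 'M[C]_(n, n * (n * n)) :=
  \matrix_(a, j) R (mxvec_index a (dec j).1) (dec j).2.
pose Y : 'M[C]_(n, n * (n * n)) :=
  \matrix_(b, j) R (mxvec_index (dec j).1 b) (dec j).2.
have eX a b k : X a (mxvec_index b k) = R (mxvec_index a b) k by rewrite mxE decE.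
have eY a b k : Y b (mxvec_index a k) = R (mxvec_index a b) k by rewrite mxE decE.
have hB : X *m adjmx X = ptrB rho.
  apply/matrixP => a a'; rewrite !mxE sum_mxvec; apply: eq_bigr => b _.
  rewrite eR mxE; apply: eq_bigr => k _; by rewrite !adjmxE !eX.
have hA : Y *m adjmx Y = ptrA rho.
  apply/matrixP => b b'; rewrite !mxE sum_mxvec; apply: eq_bigr => a _.
  rewrite eR mxE; apply: eq_bigr => k _; by rewrite !adjmxE !eY.
have := uhl X Y; rewrite hA hB.
set t := \tr (adjmx X *m Y).
pose w := \sum_a \sum_b rho (mxvec_index a b) (mxvec_index b a).
have et0 : t = \sum_b \sum_a rho (mxvec_index a b) (mxvec_index b a).
  rewrite /t mxtrace_mulC /mxtrace; apply: eq_bigr => b _.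
  rewrite mxE sum_mxvec; apply: eq_bigr => a _.
  rewrite eR mxE; apply: eq_bigr => k _; by rewrite !adjmxE eX eY.
have et : t = w by rewrite et0 /w exchange_big.
have ect : t^* = w.
  rewrite et0 rmorph_sum; apply: eq_bigr => b _; rewrite rmorph_sum.
  apply: eq_bigr => a _; rewrite -{2}hr.1 adjmxE //.
have -> : 'Re t = w.
  by rewrite ReE ect et; field.
have -> : antisym_prob rho = 2^-1 * (1 - w).
  rewrite /antisym_prob -scalemxAl mxtraceZ mulmxBl mul1mx linearB /= tr1.
  congr (_ * (_ - _)).
  rewrite /swapmx mulmx_suml raddf_sum; apply: eq_bigr => a _.
  rewrite mulmx_suml raddf_sum; apply: eq_bigr => b _; exact: trace_delta.
move=> hw.
rewrite (_ : 2^-1 - 2^-1 * _ = 2^-1 * (1 - fidelity (ptrA rho) (ptrB rho))); last by ring.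
apply: ler_wpM2l; first by rewrite invr_ge0 ler0n.
by rewrite lerD2l lerN2.
Qed.
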